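(* Let $a,b,c,d,P_{\max}>0$, and assume both frontier curves are convex, i.e. $Q_1\le0$ and $Q_2\le0$. Define the points $A=(0,\log_2(1+cP_{\max}))$ and $C=(\log_2(1+aP_{\max}),0)$, and let $\gamma=\log_2(1+cP_{\max})/\log_2(1+aP_{\max})$. Then operating via TDM is optimal, i.e. the convex hull of the power-control rate region equals the triangle with vertices $(0,0),A,C$, if $$\frac{(1+cP_{\max})(1+dP_{\max})}{1+cP_{\max}+dP_{\max}}\ \ge\ \left(\frac{1+aP_{\max}+bP_{\max}}{1+bP_{\max}}\right)^{\gamma}.$$ This inequality is equivalent to the point $B=(R_1(P_{\max},P_{\max}),R_2(P_{\max},P_{\max}))$ lying on or below the segment joining $A$ and $C$.
   Context: The channel power gains are normalized by the noise variance: $a$ (direct gain of user 1), $b$ (interference gain from transmitter 2 at receiver 1), $c$ (direct gain of user 2), $d$ (interference gain from transmitter 1 at receiver 2). The rates are $R_1(P_1,P_2)=\log_2\!\left(1+\frac{aP_1}{1+bP_2}\right)$ and $R_2(P_1,P_2)=\log_2\!\left(1+\frac{cP_2}{1+dP_1}\right)$, with $P_1,P_2\in[0,P_{\max}]$. The power-control rate region is $\{(r_1,r_2)\in\mathbb R^2_{\ge0}: \exists (P_1,P_2)\in[0,P_{\max}]^2,\ r_1\le R_1(P_1,P_2),\ r_2\le R_2(P_1,P_2)\}$. TDM (time division multiplexing) means time-sharing between $A$ (only user 2 transmits, at full power) and $C$ (only user 1 transmits, at full power). The thresholds are defined with $\alpha=d(1+bP_{\max})$ and $\beta=b(1+dP_{\max})$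 as $$Q_1=\frac{\Re\sqrt{(a-\alpha)(a-\alpha+acP_{\max})}-\alpha}{ad},\qquad Q_2=\frac{\Re\sqrt{(c-\beta)(c-\beta+acP_{\max})}-\beta}{cb}.$$ $Q_1\le 0$ means that the curve $\{(R_1(P_1,P_{\max}),R_2(P_1,P_{\max})):P_1\in[0,P_{\max}]\}$ is convex, viewed as the graph of $r_2$ as a function of $r_1$. $Q_2\le0$ means that the curve $\{(R_1(P_{\max},P_2),R_2(P_{\max},P_2)):P_2\in[0,P_{\max}]\}$ is convex. *)

(* Defs.v *)
From Stdlib Require Import Reals List.
Open Scope R_scope.

Definition log2 (x : R) : R := ln x / ln 2.

(* Real part of the principal complex square root of a real number:
   sqrt x if x >= 0, and 0 if x < 0 (sqrt of a negative is purely imaginary). *)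
Definition re_sqrt (x : R) : R := if Rle_dec 0 x then sqrt x else 0.

Definition rate1 (a b P1 P2 : R) : R := log2 (1 + a * P1 / (1 + b * P2)).
Definition rate2 (c d P1 P2 : R) : R := log2 (1 + c * P2 / (1 + d * P1)).

Definition Q1 (a b c d Pmax : R) : R :=
  let alpha := d * (1 + b * Pmax) in
  (re_sqrt ((a - alpha) * (a - alpha + a * c * Pmax)) - alpha) / (a * d).

Definition Q2 (a b c d Pmax : R) : R :=
  let beta := b * (1 + d * Pmax) in
  (re_sqrt ((c - beta) * (c - beta + a * c * Pmax)) - beta) / (c * b).

Definition rate_region (a b c d Pmax : R) (r : R * R) : Prop :=
  0 <= fst r /\ 0 <= snd r /\
  exists P1 P2, 0 <= P1 <= Pmax /\ 0 <= P2 <= Pmax /\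
    fst r <= rate1 a b P1 P2 /\ snd r <= rate2 c d P1 P2.

Definition conv_comb (l : list (R * (R * R))) : R * R :=
  (fold_right (fun wp acc => fst wp * fst (snd wp) + acc) 0 l,
   fold_right (fun wp acc => fst wp * snd (snd wp) + acc) 0 l).

Definition conv_hull (S : R * R -> Prop) (x : R * R) : Prop :=
  exists l : list (R * (R * R)),
    Forall (fun wp => 0 <= fst wp /\ S (snd wp)) l /\
    fold_right (fun wp acc => fst wp + acc) 0 l = 1 /\
    conv_comb l = x.

Definition tri_region (p q s : R * R) (x : R * R) : Prop :=
  exists l0 l1 l2, 0 <= l0 /\ 0 <= l1 /\ 0 <= l2 /\ l0 + l1 + l2 = 1 /\
    x = (l0 * fst p + l1 * fst q + l2 * fst s, l0 * snd p + l1 * snd q + l2 * snd s).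

(* Main.v *)
Require Import Defs.
From Stdlib Require Import Reals List.
From Coquelicot Require Import Coquelicot.
From Stdlib Require Import Lra Psatz.
Open Scope R_scope.

Lemma mono_inc (f df : R -> R) lo hi :
  (forall x, lo <= x <= hi -> is_derive f x (df x)) ->
  (forall x, lo <= x <= hi -> 0 <= df x) ->
  forall x y, lo <= x -> x <= y -> y <= hi -> f x <= f y.
Proof.
intros Hd Hp x y Hx Hxy Hy.
destruct (Req_dec x y) as [->|Hne]; [lra|].
destruct (MVT_gen f x y df) as [c [Hc Heq]].
- intros z Hz. apply Hd. rewrite Rmin_left in Hz by lra. rewrite Rmax_right in Hz by lra. lra.
- intros z Hz. rewrite Rmin_left in Hz by lra. rewrite Rmax_right in Hz by lra.
  apply continuity_pt_filterlim. apply (ex_derive_continuous (K:=R_AbsRing) (V:=R_NormedModule)).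
  eexists. apply Hd. lra.
- rewrite Rmin_left in Hc by lra. rewrite Rmax_right in Hc by lra.
  assert (0 <= df c) by (apply Hp; lra). nra.
Qed.

Lemma mono_dec (f df : R -> R) lo hi :
  (forall x, lo <= x <= hi -> is_derive f x (df x)) ->
  (forall x, lo <= x <= hi -> df x <= 0) ->
  forall x y, lo <= x -> x <= y -> y <= hi -> f y <= f x.
Proof.
intros Hd Hp x y Hx Hxy Hy.
assert (- f x <= - f y); [|lra].
apply (mono_inc (fun z => - f z) (fun z => - df z) lo hi); auto.
- intros z Hz. apply is_derive_Reals. apply (derivable_pt_lim_opp f z (df z)). apply is_derive_Reals. now apply Hd.
- intros z Hz. specialize (Hp z Hz). lra.
Qed.

Lemma curve (a b c d P l m : R) :
  0 < a -> 0 < b -> 0 < c -> 0 < d -> 0 < P -> 0 <= l -> 0 <= m ->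
  (forall u, 1 <= u -> 0 <= a*u*u + 2*(d*(1+b*P) - a)*u + (d*(1+b*P)-a)*c*P) ->
  forall t, 0 <= t <= P ->
  let F := fun t => l * ln (1 + a*t/(1+b*P)) + m * ln (1 + c*P/(1+d*t)) in
  F t <= F 0 \/ F t <= F P.
Proof.
intros Ha Hb Hc Hd HP Hl Hm Hh t Ht F.
set (N := fun t => 1 + b*P + a*t).
set (D := fun t => (1+d*t)*(1+d*t+c*P)).
set (g := fun t => N t / D t).
set (K := fun t => l - m * (d*c*P/a) * g t).
set (df := fun t => l*a/(1+b*P+a*t) - m*d*c*P/((1+d*t)*(1+d*t+c*P))).
assert (HF : forall s, 0 <= s <= P -> is_derive F s (df s)).
{ intros s Hs. unfold F, df. auto_derive.
  - repeat split.
    + assert (0 <= a*s/(1+b*P)) by (apply Rdiv_le_0_compat; nra). lra.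
    + nra.
    + assert (0 <= c*P/(1+d*s)) by (apply Rdiv_le_0_compat; nra). lra.
  - field. repeat split; nra. }
assert (Hdf : forall s, 0 <= s <= P -> df s = a / N s * K s).
{ intros s Hs. unfold df, K, g, N, D. field. repeat split; nra. }
assert (Hg : forall x y, 0 <= x -> x <= y -> y <= P -> g y <= g x).
{ apply (mono_dec g (fun t => - (a*(1+d*t)*(1+d*t) + 2*(d*(1+b*P) - a)*(1+d*t)
      + (d*(1+b*P)-a)*c*P) / (D t * D t)) 0 P).
  - intros s Hs. unfold g, N, D. auto_derive.
    + assert (0 < (1 + d * s) * (1 + d * s + c * P)) by (apply Rmult_lt_0_compat; nra). intro; lra.
    + assert (0 < (1 + d * s) * (1 + d * s + c * P)) by (apply Rmult_lt_0_compat; nra).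
      field. split; intro; nra.
  - intros s Hs. unfold D.
    assert (H1 := Hh (1+d*s) ltac:(nra)).
    apply Rmult_le_0_r. lra. apply Rlt_le, Rinv_0_lt_compat.
    assert (0 < (1 + d * s) * (1 + d * s + c * P)) by (apply Rmult_lt_0_compat; nra). nra. }
assert (HK : forall x y, 0 <= x -> x <= y -> y <= P -> K x <= K y).
{ intros x y Hx Hxy Hy. unfold K. assert (H := Hg x y Hx Hxy Hy).
  assert (0 <= m * (d*c*P/a)).
  { apply Rmult_le_pos; auto. apply Rdiv_le_0_compat; [|lra]. repeat apply Rmult_le_pos; lra. }
  nra. }
destruct (Rle_lt_dec (K t) 0) as [Hk|Hk].
- left. apply (mono_dec F df 0 t); try lra.
  + intros s Hs. apply HF. lra.
  + intros s Hs. rewrite Hdf by lra.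
    assert (K s <= 0) by (assert (K s <= K t) by (apply HK; lra); lra).
    assert (0 < a / N s) by (unfold N; apply Rdiv_lt_0_compat; nra). nra.
- right. apply (mono_inc F df t P); try lra.
  + intros s Hs. apply HF. lra.
  + intros s Hs. rewrite Hdf by lra.
    assert (0 <= K s) by (assert (K t <= K s) by (apply HK; lra); lra).
    assert (0 < a / N s) by (unfold N; apply Rdiv_lt_0_compat; nra). nra.
Qed.

Lemma hQ (a b c d P : R) :
  0 < a -> 0 < b -> 0 < c -> 0 < d -> 0 < P ->
  (re_sqrt ((a - d*(1+b*P)) * (a - d*(1+b*P) + a*c*P)) - d*(1+b*P)) / (a*d) <= 0 ->
  forall u, 1 <= u -> 0 <= a*u*u + 2*(d*(1+b*P) - a)*u + (d*(1+b*P)-a)*c*P.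
Proof.
intros Ha Hb Hc Hd HP HQ u Hu.
set (al := d*(1+b*P)) in *.
set (Dd := (a - al) * (a - al + a*c*P)) in *.
assert (Hid : a * (a*u*u + 2*(al - a)*u + (al-a)*c*P) = (a*u - a + al)^2 - Dd)
  by (unfold Dd; ring).
unfold re_sqrt in HQ. destruct (Rle_dec 0 Dd) as [HD|HD].
- set (s := sqrt Dd) in *.
  assert (Hs2 : s * s = Dd) by (apply sqrt_sqrt; lra).
  assert (Hs0 : 0 <= s) by apply sqrt_pos.
  assert (Hsa : s <= al).
  { destruct (Rle_lt_dec s al); auto.
    assert (0 < (s - al) / (a*d)) by (apply Rdiv_lt_0_compat; nra). lra. }
  assert (Hf : (a*u - a + al)^2 - Dd = (a*u - a + al - s) * (a*u - a + al + s)) by (rewrite <- Hs2; ring).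
  assert (0 <= (a*u - a + al - s) * (a*u - a + al + s)) by (apply Rmult_le_pos; nra).
  apply (Rmult_le_reg_l a); [lra|]. rewrite Rmult_0_r, Hid, Hf. lra.
- apply (Rmult_le_reg_l a); [lra|]. rewrite Rmult_0_r, Hid.
  assert (0 <= (a*u - a + al)^2) by (apply pow2_ge_0). lra.
Qed.

Lemma ln_le' x y : 0 < x -> x <= y -> ln x <= ln y.
Proof. intros Hx Hxy. destruct (Rle_lt_or_eq_dec _ _ Hxy) as [H|H].
- left. now apply ln_increasing. - subst; lra. Qed.

Lemma ln_pos' x : 1 < x -> 0 < ln x.
Proof. intros. rewrite <- ln_1. apply ln_increasing; lra. Qed.

Lemma ln_nonneg x : 1 <= x -> 0 <= ln x.
Proof. intros. rewrite <- ln_1. apply ln_le'; lra. Qed.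

Lemma exp_le_iff u y : 0 < y -> (exp u <= y <-> u <= ln y).
Proof.
intros Hy. split; intros H.
- destruct (Rle_lt_dec u (ln y)) as [|Hl]; auto.
  apply exp_increasing in Hl. rewrite exp_ln in Hl by lra. lra.
- destruct (Rle_lt_or_eq_dec _ _ H) as [Hl|Hl].
  + apply exp_increasing in Hl. rewrite exp_ln in Hl by lra. lra.
  + rewrite Hl, exp_ln by lra. lra.
Qed.

Lemma frac_nonneg x y : 0 <= x -> 0 < y -> 0 <= x / y.
Proof. intros. apply Rdiv_le_0_compat; lra. Qed.

Lemma key (a b c d P : R) :
  0 < a -> 0 < b -> 0 < c -> 0 < d -> 0 < P ->
  Q1 a b c d P <= 0 -> Q2 a b c d P <= 0 ->
  ln (1 + a*P/(1+b*P)) / ln (1 + a*P) + ln (1 + c*P/(1+d*P)) / ln (1 + c*P) <= 1 ->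
  forall P1 P2, 0 <= P1 <= P -> 0 <= P2 <= P ->
  ln (1 + a*P1/(1+b*P2)) / ln (1 + a*P) + ln (1 + c*P2/(1+d*P1)) / ln (1 + c*P) <= 1.
Proof.
intros Ha Hb Hc Hd HP HQ1 HQ2 HB P1 P2 HP1 HP2.
assert (HLA : 0 < ln (1 + c*P)) by (apply ln_pos'; nra).
assert (HLC : 0 < ln (1 + a*P)) by (apply ln_pos'; nra).
set (LA := ln (1 + c*P)) in *. set (LC := ln (1 + a*P)) in *.
assert (H1 := hQ a b c d P Ha Hb Hc Hd HP HQ1).
assert (H2 : forall u, 1 <= u -> 0 <= c*u*u + 2*(b*(1+d*P) - c)*u + (b*(1+d*P)-c)*a*P).
{ apply hQ; auto. unfold Q2 in HQ2.
  replace (c * a * P) with (a * c * P) by ring. exact HQ2. }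
assert (HiA : 0 < / LA) by (apply Rinv_0_lt_compat; lra).
assert (HiC : 0 < / LC) by (apply Rinv_0_lt_compat; lra).
destruct (Rle_dec P1 P2) as [Hle|Hle].
- destruct (Req_dec P2 0) as [H0|H0].
  + assert (P1 = 0) by lra. subst. 
    replace (1 + a * 0 / (1 + b * 0)) with 1 by field.
    replace (1 + c * 0 / (1 + d * 0)) with 1 by field. rewrite ln_1. 
    unfold Rdiv. rewrite !Rmult_0_l. lra.
  + set (t := P1 * P / P2).
    assert (Ht : 0 <= t <= P).
    { unfold t. split. apply frac_nonneg; nra.
      apply (Rmult_le_reg_r P2); [lra|]. unfold Rdiv. rewrite Rmult_assoc, Rinv_l by lra. nra. }
    assert (E1 : ln (1 + a*P1/(1+b*P2)) <= ln (1 + a*t/(1+b*P))).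
    { apply ln_le'. assert (0 <= a*P1/(1+b*P2)) by (apply frac_nonneg; nra). lra.
      assert (a*t/(1+b*P) - a*P1/(1+b*P2) = a*P1*(P-P2)/(P2*(1+b*P)*(1+b*P2)))
        by (unfold t; field; repeat split; nra).
      assert (0 <= a*P1*(P-P2)/(P2*(1+b*P)*(1+b*P2))).
      { apply frac_nonneg. apply Rmult_le_pos; nra.
        apply Rmult_lt_0_compat; [|nra]. apply Rmult_lt_0_compat; nra. }
      lra. }
    assert (E2 : ln (1 + c*P2/(1+d*P1)) <= ln (1 + c*P/(1+d*t))).
    { apply ln_le'. assert (0 <= c*P2/(1+d*P1)) by (apply frac_nonneg; nra). lra.
      assert (c*P/(1+d*t) - c*P2/(1+d*P1) = c*(P-P2)/((1+d*t)*(1+d*P1))).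
      { unfold t. field. repeat split; try nra.
        assert (0 <= d * (P1 * P)) by (apply Rmult_le_pos; nra). intro; lra. }
      assert (0 <= c*(P-P2)/((1+d*t)*(1+d*P1))).
      { apply frac_nonneg. nra. apply Rmult_lt_0_compat; nra. }
      lra. }
    destruct (curve a b c d P (/LC) (/LA) Ha Hb Hc Hd HP ltac:(lra) ltac:(lra) H1 t Ht) as [Hc0|Hc0];
    cbv beta in Hc0.
    * replace (1 + a * 0 / (1 + b * P)) with 1 in Hc0 by (field; apply Rgt_not_eq; nra).
      replace (1 + c * P / (1 + d * 0)) with (1 + c*P) in Hc0 by (field; apply Rgt_not_eq; nra).
      rewrite ln_1 in Hc0. fold LA in Hc0. rewrite Rinv_l in Hc0 by lra.
      unfold Rdiv. nra.
    * unfold Rdiv in *. nra.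
- assert (HP1p : 0 < P1) by lra.
  set (t := P2 * P / P1).
  assert (Ht : 0 <= t <= P).
  { unfold t. split. apply frac_nonneg; nra.
    apply (Rmult_le_reg_r P1); [lra|]. unfold Rdiv. rewrite Rmult_assoc, Rinv_l by lra. nra. }
  assert (E1 : ln (1 + c*P2/(1+d*P1)) <= ln (1 + c*t/(1+d*P))).
  { apply ln_le'. assert (0 <= c*P2/(1+d*P1)) by (apply frac_nonneg; nra). lra.
    assert (c*t/(1+d*P) - c*P2/(1+d*P1) = c*P2*(P-P1)/(P1*(1+d*P)*(1+d*P1)))
      by (unfold t; field; repeat split; nra).
    assert (0 <= c*P2*(P-P1)/(P1*(1+d*P)*(1+d*P1))).
    { apply frac_nonneg. apply Rmult_le_pos; nra.
      apply Rmult_lt_0_compat; [|nra]. apply Rmult_lt_0_compat; nra. }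
    lra. }
  assert (E2 : ln (1 + a*P1/(1+b*P2)) <= ln (1 + a*P/(1+b*t))).
  { apply ln_le'. assert (0 <= a*P1/(1+b*P2)) by (apply frac_nonneg; nra). lra.
    assert (a*P/(1+b*t) - a*P1/(1+b*P2) = a*(P-P1)/((1+b*t)*(1+b*P2))).
    { unfold t. field. repeat split; try nra.
      assert (0 <= b * (P2 * P)) by (apply Rmult_le_pos; nra). intro; lra. }
    assert (0 <= a*(P-P1)/((1+b*t)*(1+b*P2))).
    { apply frac_nonneg. nra. apply Rmult_lt_0_compat; nra. }
    lra. }
  destruct (curve c d a b P (/LA) (/LC) Hc Hd Ha Hb HP ltac:(lra) ltac:(lra) H2 t Ht) as [Hc0|Hc0];
  cbv beta in Hc0.
  * replace (1 + c * 0 / (1 + d * P)) with 1 in Hc0 by (field; apply Rgt_not_eq; nra).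
    replace (1 + a * P / (1 + b * 0)) with (1 + a*P) in Hc0 by (field; apply Rgt_not_eq; nra).
    rewrite ln_1 in Hc0. fold LC in Hc0. rewrite Rinv_l in Hc0 by lra.
    unfold Rdiv. nra.
  * unfold Rdiv in *. nra.
Qed.

Lemma conv_ineq (S : R * R -> Prop) (RA RC : R) :
  (forall p, S p -> 0 <= fst p /\ 0 <= snd p /\ fst p * RA + snd p * RC <= RA * RC) ->
  forall l, List.Forall (fun wp => 0 <= fst wp /\ S (snd wp)) l ->
  0 <= fst (conv_comb l) /\ 0 <= snd (conv_comb l) /\
  fst (conv_comb l) * RA + snd (conv_comb l) * RC
    <= fold_right (fun wp acc => fst wp + acc) 0 l * (RA * RC).
Proof.
intros HS l Hl. induction Hl as [|wp l Hwp Hl IH]; [cbn; lra|].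
destruct wp as [w p]. destruct Hwp as [Hw Hp]. cbn in *.
- destruct (HS p Hp) as [H1 [H2 H3]]. destruct IH as [I1 [I2 I3]].
  repeat split.
  + assert (0 <= w * fst p) by (apply Rmult_le_pos; lra). lra.
  + assert (0 <= w * snd p) by (apply Rmult_le_pos; lra). lra.
  + assert (w * (fst p * RA + snd p * RC) <= w * (RA * RC)) by (apply Rmult_le_compat_l; lra).
    nra.
Qed.

Lemma log2_nonneg z : 0 <= z -> 0 <= log2 (1 + z).
Proof.
intros. unfold log2. apply frac_nonneg. apply ln_nonneg; lra.
apply ln_pos'; lra.
Qed.

Theorem lemma2 (a b c d Pmax : R) :
  0 < a -> 0 < b -> 0 < c -> 0 < d -> 0 < Pmax ->
  Q1 a b c d Pmax <= 0 -> Q2 a b c d Pmax <= 0 ->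
  let RA := log2 (1 + c * Pmax) in
  let RC := log2 (1 + a * Pmax) in
  let A := (0, RA) in
  let C := (RC, 0) in
  let gamma := RA / RC in
  let B := (rate1 a b Pmax Pmax, rate2 c d Pmax Pmax) in
  let cond :=
    Rpower ((1 + a * Pmax + b * Pmax) / (1 + b * Pmax)) gamma
      <= (1 + c * Pmax) * (1 + d * Pmax) / (1 + c * Pmax + d * Pmax) in
  (* the condition is equivalent to B lying on or below the segment AC *)
  (cond <-> snd B <= RA * (1 - fst B / RC)) /\
  (* under the condition, TDM is optimal *)
  (cond -> forall x : R * R,
     conv_hull (rate_region a b c d Pmax) x <-> tri_region (0, 0) A C x).
Proof.
intros Ha Hb Hc Hd HP HQ1 HQ2. cbv zeta. cbn [fst snd].
set (P := Pmax) in *.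
assert (Hl2 : 0 < ln 2) by (apply ln_pos'; lra).
assert (HLA : 0 < ln (1 + c*P)) by (apply ln_pos'; nra).
assert (HLC : 0 < ln (1 + a*P)) by (apply ln_pos'; nra).
set (LA := ln (1 + c*P)) in *. set (LC := ln (1 + a*P)) in *.
set (XB := ln (1 + a*P/(1+b*P))).
set (YB := ln (1 + c*P/(1+d*P))).
assert (Hpos1 : 0 < 1 + a*P/(1+b*P)).
{ assert (0 <= a*P/(1+b*P)) by (apply frac_nonneg; nra). lra. }
assert (Hpos2 : 0 < 1 + c*P/(1+d*P)).
{ assert (0 <= c*P/(1+d*P)) by (apply frac_nonneg; nra). lra. }
assert (EX : ln ((1 + a * P + b * P) / (1 + b * P)) = XB).
{ unfold XB. f_equal. field. apply Rgt_not_eq; nra. }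
assert (EY : ln ((1 + c * P) * (1 + d * P) / (1 + c * P + d * P)) = LA - YB).
{ unfold YB, LA. replace ((1 + c * P) * (1 + d * P) / (1 + c * P + d * P))
    with ((1 + c*P) * / (1 + c*P/(1+d*P))).
  rewrite ln_mult, ln_Rinv; try lra; try nra; try (apply Rinv_0_lt_compat; lra).
  field. split; apply Rgt_not_eq; nra. }
assert (Hcore : (Rpower ((1 + a * P + b * P) / (1 + b * P)) (log2 (1 + c * P) / log2 (1 + a * P))
    <= (1 + c * P) * (1 + d * P) / (1 + c * P + d * P)) <-> XB / LC + YB / LA <= 1).
{ unfold Rpower. rewrite exp_le_iff, EX, EY.
  all: try (apply Rdiv_lt_0_compat; [apply Rmult_lt_0_compat|]; nra).
  unfold log2. fold LA LC.
  replace (LA / ln 2 / (LC / ln 2) * XB) with (LA * (XB / LC)) by (field; repeat split; apply Rgt_not_eq; lra).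
  split; intros H.
  - apply (Rmult_le_reg_l LA); [lra|].
    replace (LA * (XB / LC + YB / LA)) with (LA * (XB / LC) + YB) by (field; repeat split; apply Rgt_not_eq; lra). lra.
  - apply (Rmult_le_compat_l LA) in H; [|lra].
    replace (LA * (XB / LC + YB / LA)) with (LA * (XB / LC) + YB) in H by (field; repeat split; apply Rgt_not_eq; lra).
    lra. }
split.
- rewrite Hcore. unfold rate1, rate2, log2. fold XB YB LA LC.
  split; intros H.
  + replace (LA / ln 2 * (1 - XB / ln 2 / (LC / ln 2))) with ((LA - LA * (XB / LC))/ ln 2)
      by (field; repeat split; apply Rgt_not_eq; lra).
    apply Rmult_le_compat_r. apply Rlt_le, Rinv_0_lt_compat; lra.
    apply (Rmult_le_compat_l LA) in H; [|lra].
    replace (LA * (XB / LC + YB / LA)) with (LA * (XB / LC) + YB) in H by (field; repeat split; apply Rgt_not_eq; lra). lra.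
  + replace (LA / ln 2 * (1 - XB / ln 2 / (LC / ln 2))) with ((LA - LA * (XB / LC))/ ln 2)
      in H by (field; repeat split; apply Rgt_not_eq; lra).
    assert (YB <= LA - LA * (XB / LC)).
    { apply (Rmult_le_reg_r (/ ln 2)). apply Rinv_0_lt_compat; lra. exact H. }
    apply (Rmult_le_reg_l LA); [lra|].
    replace (LA * (XB / LC + YB / LA)) with (LA * (XB / LC) + YB) by (field; repeat split; apply Rgt_not_eq; lra). lra.
- intros Hcond x. rewrite Hcore in Hcond.
  assert (HK := key a b c d P Ha Hb Hc Hd HP HQ1 HQ2 Hcond).
  fold LA LC in HK.
  set (RA := log2 (1 + c * P)). set (RC := log2 (1 + a * P)).
  assert (HRA : 0 < RA) by (unfold RA, log2; fold LA; apply Rdiv_lt_0_compat; lra).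
  assert (HRC : 0 < RC) by (unfold RC, log2; fold LC; apply Rdiv_lt_0_compat; lra).
  split.
  + intros [l [Hl [Hw Hx]]].
    destruct (conv_ineq (rate_region a b c d P) RA RC) with (l := l) as [I1 [I2 I3]]; auto.
    * intros [r1 r2] [H1 [H2 [P1 [P2 [HP1 [HP2 [Hr1 Hr2]]]]]]]. cbn [fst snd] in *.
      repeat split; auto.
      assert (Hk := HK P1 P2 HP1 HP2).
      unfold rate1, rate2, log2 in Hr1, Hr2.
      set (X := ln (1 + a * P1 / (1 + b * P2))) in *.
      set (Y := ln (1 + c * P2 / (1 + d * P1))) in *.
      assert (HXY : X * LA + Y * LC <= LA * LC).
      { apply (Rmult_le_compat_l (LA * LC)) in Hk; [|nra].
        replace (LA * LC * (X / LC + Y / LA)) with (X * LA + Y * LC) in Hk by (field; repeat split; apply Rgt_not_eq; lra).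
        lra. }
      unfold RA, RC, log2. fold LA LC.
      set (i := / ln 2).
      assert (Hi : 0 < i) by (apply Rinv_0_lt_compat; lra).
      unfold Rdiv in *. fold i in Hr1, Hr2 |- *.
      assert (r1 * (LA * i) <= X * i * (LA * i)) by (apply Rmult_le_compat_r; nra).
      assert (r2 * (LC * i) <= Y * i * (LC * i)) by (apply Rmult_le_compat_r; nra).
      assert ((X * LA + Y * LC) * (i * i) <= LA * LC * (i * i)) by (apply Rmult_le_compat_r; nra).
      nra.
    * rewrite Hw in I3. rewrite <- Hx. destruct (conv_comb l) as [x1 x2]. cbn [fst snd] in *.
      exists (1 - x2 / RA - x1 / RC), (x2 / RA), (x1 / RC).
      repeat split.
      -- apply (Rmult_le_reg_l (RA * RC)); [nra|].
         replace (RA * RC * (1 - x2 / RA - x1 / RC)) with (RA * RC - x2 * RC - x1 * RA) by (field; repeat split; apply Rgt_not_eq; lra).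
         lra.
      -- apply frac_nonneg; lra.
      -- apply frac_nonneg; lra.
      -- ring.
      -- cbn [fst snd]. f_equal; field; repeat split; apply Rgt_not_eq; lra.
  + intros [l0 [l1 [l2 [H0 [H1 [H2 [Hs Hx]]]]]]].
    exists ((l0, (0, 0)) :: (l1, (0, RA)) :: (l2, (RC, 0)) :: nil).
    repeat split.
    * constructor; [split; [exact H0|]|].
      { unfold rate_region; cbn [fst snd]. split; [lra|]. split; [lra|].
        exists 0, 0. repeat split; try lra; unfold rate1, rate2;
        apply log2_nonneg; apply frac_nonneg; nra. }
      constructor; [split; [exact H1|]|].
      { unfold rate_region; cbn [fst snd]. split; [lra|]. split; [lra|].
        exists 0, P. repeat split; try lra.
        - unfold rate1; apply log2_nonneg; apply frac_nonneg; nra.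
        - unfold rate2, RA. right. f_equal. field. }
      constructor; [split; [exact H2|]|].
      { unfold rate_region; cbn [fst snd]. split; [lra|]. split; [lra|].
        exists P, 0. repeat split; try lra.
        - unfold rate1, RC. right. f_equal. field.
        - unfold rate2; apply log2_nonneg; apply frac_nonneg; nra. }
      constructor.
    * cbn. lra.
    * rewrite Hx. unfold conv_comb. cbn. f_equal; ring.
Qed.
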